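(* In the setting of the context, suppose for every $i\in\mathcal D$: $k^C_{1,i}<1$, $k^C_{2,i}<R^C_{ti}$, $k^C_{3,i}>0$, $k^V_{1,i}<1$, $k^V_{2,i}<R^V_{ti}$, $0<k^V_{3,i}<\frac{1}{L^V_{ti}}(k^V_{1,i}-1)(k^V_{2,i}-R^V_{ti})$. Fix $\bar\sigma>0$ and put $\eta_i=\bar\sigma C_{ti}$, $p^C_{22,i}=\frac{L^C_{ti}\eta_i}{C_{ti}(1-k^C_{1,i})}$, $h_i=L^V_{ti}k^V_{3,i}-(k^V_{1,i}-1)(k^V_{2,i}-R^V_{ti})$, $$P_i=\mathrm{blockdiag}\Big(\eta_i,\;\begin{bmatrix}p^C_{22,i}&0\\0&\frac{k^C_{3,i}}{L^C_{ti}}p^C_{22,i}\end{bmatrix},\;\frac{\eta_i}{C_{ti}h_i}\begin{bmatrix}L^V_{ti}(k^V_{2,i}-R^V_{ti})&L^V_{ti}k^V_{3,i}\\L^V_{ti}k^V_{3,i}&k^V_{3,i}(k^V_{1,i}-1)\end{bmatrix}\Big),$$ and $\mathbf P=\mathrm{diag}(P_1,\dots,P_N)$. Then $\mathbf F^T\mathbf P+\mathbf P\mathbf F\le0$.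
   Context: Let $N\ge1$, $\mathcal D=\{1,\dots,N\}$, $\mathcal G_{el}$ an undirected graph on $\mathcal D$ with neighbor sets $\mathcal N_i$; for each $i$ let $C_{ti},L^C_{ti},R^C_{ti},L^V_{ti},R^V_{ti},R_{Li}>0$ and for each edge $R_{ij}=R_{ji}>0$. Let $$F_i=\begin{bmatrix}0&\frac{1}{C_{ti}}&0&\frac{1}{C_{ti}}&0\\ \frac{k^C_{1,i}-1}{L^C_{ti}}&\frac{k^C_{2,i}-R^C_{ti}}{L^C_{ti}}&\frac{k^C_{3,i}}{L^C_{ti}}&0&0\\ 0&-1&0&0&0\\ \frac{k^V_{1,i}-1}{L^V_{ti}}&0&0&\frac{k^V_{2,i}-R^V_{ti}}{L^V_{ti}}&\frac{k^V_{3,i}}{L^V_{ti}}\\ -1&0&0&0&0\end{bmatrix},$$ $e_1=(1,0,0,0,0)^T$, and let $\mathbf F\in\mathbb{R}^{5N\times5N}$ (closed-loop matrix of the cluster of microgrids) have $(i,i)$ block $F_i-\Big(\frac{1}{R_{Li}C_{ti}}+\sum_{j\in\mathcal N_i}\frac{1}{R_{ij}C_{ti}}\Big)e_1e_1^T$ and $(i,j)$ block ($j\ne i$) equal to $\frac{1}{R_{ij}C_{ti}}e_1e_1^T$ if $j\in\mathcal N_i$, $0$ otherwise. Block sizes in $\mathrm{blockdiag}$ are $1,2,2$. Matrix inequalities are in the semidefinite sense. *)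

(* Defs.v *)
From HB Require Import structures.
From mathcomp Require Import all_boot all_order all_algebra.
Set Implicit Arguments. Unset Strict Implicit. Unset Printing Implicit Defensive.
Import Order.TTheory GRing.Theory Num.Theory.
Local Open Scope ring_scope.

Definition nsd (R : realFieldType) (n : nat) (M : 'M[R]_n) : Prop :=
  forall x : 'cV[R]_n, (x^T *m M *m x) 0 0 <= 0.

Definition mk5 (R : nzRingType) (f : nat -> nat -> R) : 'M[R]_5 :=
  \matrix_(a < 5, b < 5) f (a : nat) (b : nat).

Definition e1 (R : nzRingType) : 'cV[R]_5 := delta_mx 0 0.

Definition Fi (R : realFieldType) (Ct LCt RCt LVt RVt kC1 kC2 kC3 kV1 kV2 kV3 : R)
  : 'M[R]_5 :=
  mk5 (fun a b =>
    match a, b with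
    | 0%N, 1%N => 1 / Ct
    | 0%N, 3%N => 1 / Ct
    | 1%N, 0%N => (kC1 - 1) / LCt
    | 1%N, 1%N => (kC2 - RCt) / LCt
    | 1%N, 2%N => kC3 / LCt
    | 2%N, 1%N => -1
    | 3%N, 0%N => (kV1 - 1) / LVt
    | 3%N, 3%N => (kV2 - RVt) / LVt
    | 3%N, 4%N => kV3 / LVt
    | 4%N, 0%N => -1
    | _, _ => 0
    end).

(* The closed-loop matrix of the cluster, as an N x N block matrix of 5x5 blocks.
   Neighbour sets: N_i = [pred j | e i j]. *)
Definition Fcl (R : realFieldType) (N : nat) (e : rel 'I_N)
  (Ct LCt RCt LVt RVt RL : 'I_N -> R) (Rl : 'I_N -> 'I_N -> R)
  (kC1 kC2 kC3 kV1 kV2 kV3 : 'I_N -> R)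
  : 'M[R]_(\sum_(i < N) 5) :=
  \mxblock_(i < N, j < N)
    (if i == j then
       Fi (Ct i) (LCt i) (RCt i) (LVt i) (RVt i)
          (kC1 i) (kC2 i) (kC3 i) (kV1 i) (kV2 i) (kV3 i)
       - (1 / (RL i * Ct i) + \sum_(k < N | e i k) 1 / (Rl i k * Ct i))
           *: (e1 R *m (e1 R)^T)
     else if e i j then (1 / (Rl i j * Ct i)) *: (e1 R *m (e1 R)^T)
     else 0 : 'M[R]_5).

Definition Pi (R : realFieldType) (sigma : R)
  (Ct LCt RCt LVt RVt kC1 kC2 kC3 kV1 kV2 kV3 : R) : 'M[R]_5 :=
  let eta := sigma * Ct in
  let p22 := LCt * eta / (Ct * (1 - kC1)) in
  let h := LVt * kV3 - (kV1 - 1) * (kV2 - RVt) in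
  let c := eta / (Ct * h) in
  mk5 (fun a b =>
    match a, b with
    | 0%N, 0%N => eta
    | 1%N, 1%N => p22
    | 2%N, 2%N => kC3 / LCt * p22
    | 3%N, 3%N => c * (LVt * (kV2 - RVt))
    | 3%N, 4%N => c * (LVt * kV3)
    | 4%N, 3%N => c * (LVt * kV3)
    | 4%N, 4%N => c * (kV3 * (kV1 - 1))
    | _, _ => 0
    end).

Definition Pcl (R : realFieldType) (N : nat) (sigma : R)
  (Ct LCt RCt LVt RVt : 'I_N -> R) (kC1 kC2 kC3 kV1 kV2 kV3 : 'I_N -> R)
  : 'M[R]_(\sum_(i < N) 5) :=
  \mxdiag_(i < N)
    Pi sigma (Ct i) (LCt i) (RCt i) (LVt i) (RVt i)
       (kC1 i) (kC2 i) (kC3 i) (kV1 i) (kV2 i) (kV3 i).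

(* Main.v *)
Require Import Defs.
From HB Require Import structures.
From mathcomp Require Import all_boot all_order all_algebra.
From mathcomp Require Import ring lra.
Import Order.TTheory GRing.Theory Num.Theory.
Local Open Scope ring_scope.

Lemma mul3E (R : nzRingType) (u w : 'cV[R]_5) (A B : 'M[R]_5) :
  (u^T *m A *m B *m w) 0 0 = \sum_c (\sum_b (\sum_a u a 0 * A a b) * B b c) * w c 0.
Proof.
rewrite mxE; apply: eq_bigr => c _; rewrite mxE; congr (_ * _).
apply: eq_bigr => b _; rewrite mxE; congr (_*_); apply: eq_bigr => a _; rewrite mxE //.
Qed.

Definition i1 : 'I_5 := lift ord0 ord0.
Definition i2 : 'I_5 := lift ord0 (lift ord0 ord0).
Definition i3 : 'I_5 := lift ord0 (lift ord0 (lift ord0 ord0)).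
Definition i4 : 'I_5 := lift ord0 (lift ord0 (lift ord0 (lift ord0 ord0))).
Definition S5o {R : nzRingType} (h : 'I_5 -> R) := h ord0 + h i1 + h i2 + h i3 + h i4.
Lemma sum5o (R : nzRingType) (h : 'I_5 -> R) : \sum_(i < 5) h i = S5o h.
Proof. by rewrite !big_ord_recl big_ord0 /S5o !addrA addr0. Qed.


Lemma mk5E (R : nzRingType) f a b : @mk5 R f a b = f a b.
Proof. by rewrite mxE. Qed.

Definition E5 (R : nzRingType) : 'M[R]_5 := mk5 (fun a b => match a, b with 0%N, 0%N => 1 | _, _ => 0 end).

Lemma e1E (R : nzRingType) : e1 R *m (e1 R)^T = E5 R.
Proof.
apply/matrixP => a b; rewrite /E5 mk5E !mxE big_ord1 !mxE.
case: a => [[|a] Ha]; case: b => [[|b] Hb]; rewrite /= ?mulr1 ?mulr0 ?mul0r ?mul1r //.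
Qed.

Lemma mk5B (R : nzRingType) f g (d : R) : mk5 f - d *: mk5 g = mk5 (fun a b => f a b - d * g a b).
Proof. by apply/matrixP => a b; rewrite !mxE. Qed.

Lemma mk5mul (R : nzRingType) f g (u w : 'cV[R]_5) :
  (u^T *m mk5 f *m mk5 g *m w) 0 0 =
  \sum_(c < 5) (\sum_(b < 5) (\sum_(a < 5) u a 0 * f a b) * g b c) * w c 0.
Proof.
rewrite mul3E; apply: eq_bigr => c _; congr (_ * _).
apply: eq_bigr => b _; rewrite mk5E; congr (_*_); apply: eq_bigr => a _; rewrite mk5E //.
Qed.

Lemma mk5mul_exp (R : nzRingType) f g (u w : 'cV[R]_5) :
  (u^T *m mk5 f *m mk5 g *m w) 0 0 =
  S5o (fun c => S5o (fun b => S5o (fun a => u a 0 * f a b) * g b c) * w c 0).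
Proof.
rewrite mk5mul.
under eq_bigr => c _ do under eq_bigr => b _ do rewrite sum5o.
under eq_bigr => c _ do rewrite sum5o.
by rewrite sum5o.
Qed.

Lemma blockD (R : realFieldType) (sigma Ct LCt RCt LVt RVt kC1 kC2 kC3 kV1 kV2 kV3 d : R) (u : 'cV[R]_5) :
  Ct != 0 -> LCt != 0 -> 1 - kC1 != 0 -> LVt != 0 ->
  LVt * kV3 - (kV1 - 1) * (kV2 - RVt) != 0 ->
  (u^T *m Pi sigma Ct LCt RCt LVt RVt kC1 kC2 kC3 kV1 kV2 kV3 *m
     (Fi Ct LCt RCt LVt RVt kC1 kC2 kC3 kV1 kV2 kV3 - d *: (e1 R *m (e1 R)^T)) *m u) 0 0 =
  sigma * (kC2 - RCt) / (1 - kC1) * (u i1 0)^+2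
  + sigma / (LVt * kV3 - (kV1 - 1) * (kV2 - RVt)) * ((kV2 - RVt) * u i3 0 + kV3 * u i4 0)^+2
  - d * (sigma * Ct) * (u ord0 0)^+2.
Proof.
move=> h1 h2 h3 h4 h5.
rewrite e1E /Pi /Fi /E5 mk5B mk5mul_exp /S5o /=.
field.
by rewrite h5 h3 h4 h2 h1.
Qed.

Lemma blockE (R : realFieldType) (sigma Ct LCt RCt LVt RVt kC1 kC2 kC3 kV1 kV2 kV3 d : R) (u w : 'cV[R]_5) :
  (u^T *m Pi sigma Ct LCt RCt LVt RVt kC1 kC2 kC3 kV1 kV2 kV3 *m
     (d *: (e1 R *m (e1 R)^T)) *m w) 0 0 = d * (sigma * Ct) * u ord0 0 * w ord0 0.
Proof.
have -> : d *: (e1 R *m (e1 R)^T) = mk5 (fun a b => d * match a, b with 0%N, 0%N => 1 | _, _ => 0 end).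
  by rewrite e1E; apply/matrixP => a b; rewrite !mxE.
rewrite /Pi mk5mul_exp /S5o /=.
ring.
Qed.

Lemma Pi_sym (R : realFieldType) (sigma Ct LCt RCt LVt RVt kC1 kC2 kC3 kV1 kV2 kV3 : R) :
  (Pi sigma Ct LCt RCt LVt RVt kC1 kC2 kC3 kV1 kV2 kV3)^T = Pi sigma Ct LCt RCt LVt RVt kC1 kC2 kC3 kV1 kV2 kV3.
Proof.
apply/matrixP => a b; rewrite mxE /Pi !mk5E.
by case: a => [[|[|[|[|[|a]]]]] Ha]; case: b => [[|[|[|[|[|b]]]]] Hb].
Qed.
Lemma sum_le0 (R: realFieldType) N (e : rel 'I_N) (w : 'I_N -> 'I_N -> R) (L v : 'I_N -> R) :
 (forall i j, e i j = e j i) -> (forall i, ~~ e i i) ->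
 (forall i j, e i j -> w i j = w j i) -> (forall i j, e i j -> 0 <= w i j) ->
 (forall i, L i <= 0) ->
 \sum_j \sum_i (if i == j then L i - \sum_(k | e i k) w i k * v i ^+ 2
                else if e i j then w i j * v i * v j else 0) <= 0.
Proof.
move=> esym eirr wsym wpos Lneg.
rewrite exchange_big /=.
have step : forall i, \sum_j (if i == j then L i - \sum_(k | e i k) w i k * v i ^+ 2
                else if e i j then w i j * v i * v j else 0)
   = L i + \sum_j (if e i j then w i j * (v i * v j - v i ^+ 2) else 0).
  move=> i; rewrite (bigD1 i) //= eqxx.
  rewrite [X in _ + X](eq_bigr (fun j => if e i j then w i j * v i * v j else 0)); last first.
    by move=> j; rewrite eq_sym => /negbTE ->.
  have -> : \sum_(j < N | j != i) (if e i j then w i j * v i * v j else 0)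
          = \sum_j (if e i j then w i j * v i * v j else 0).
    by rewrite [RHS](bigD1 i) //= (negbTE (eirr i)) add0r.
  have -> : \sum_(k < N | e i k) w i k * v i ^+ 2 = \sum_k (if e i k then w i k * v i ^+ 2 else 0).
    by rewrite big_mkcond.
  have -> : \sum_j (if e i j then w i j * (v i * v j - v i ^+ 2) else 0)
      = \sum_j (if e i j then w i j * v i * v j else 0) - \sum_j (if e i j then w i j * v i ^+ 2 else 0).
    rewrite -sumrB; apply: eq_bigr => j _; case: (e i j); [ring | by rewrite subr0].
  ring.
rewrite (eq_bigr _ (fun i _ => step i)) big_split /=.
set S := \sum_i \sum_j _.
have HL : \sum_i L i <= 0.
  rewrite -oppr_ge0 -sumrN; apply: sumr_ge0 => i _; rewrite oppr_ge0; exact: Lneg.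
have HS : S *+ 2 = - \sum_i \sum_j (if e i j then w i j * (v i - v j) ^+ 2 else 0).
  rewrite mulr2n {2}/S exchange_big /= /S -big_split -sumrN /=; apply: eq_bigr => i _.
  rewrite -big_split -sumrN /=; apply: eq_bigr => j _.
  rewrite (esym j i); case Eij: (e i j); last by rewrite addr0 oppr0.
  rewrite (wsym j i); last by rewrite esym.
  ring.
have HS2 : 0 <= \sum_i \sum_j (if e i j then w i j * (v i - v j) ^+ 2 else 0).
  apply: sumr_ge0 => i _; apply: sumr_ge0 => j _.
  case Eij: (e i j) => //; apply: mulr_ge0; [exact: wpos | exact: sqr_ge0].
have : S <= 0.
  have : S *+ 2 <= 0 by rewrite HS oppr_le0.
  by rewrite mulr2n; lra.
lra.
Qed.

Theorem proposition6 (R : realFieldType) (N : nat) (e : rel 'I_N)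
  (Ct LCt RCt LVt RVt RL : 'I_N -> R) (Rl : 'I_N -> 'I_N -> R)
  (kC1 kC2 kC3 kV1 kV2 kV3 : 'I_N -> R) (sigma : R) :
  (1 <= N)%N ->
  (forall i j, e i j = e j i) ->
  (forall i, ~~ e i i) ->
  (forall i, 0 < Ct i /\ 0 < LCt i /\ 0 < RCt i /\ 0 < LVt i /\ 0 < RVt i /\ 0 < RL i) ->
  (forall i j, e i j -> 0 < Rl i j /\ Rl i j = Rl j i) ->
  (forall i, kC1 i < 1 /\ kC2 i < RCt i /\ 0 < kC3 i /\ kV1 i < 1 /\ kV2 i < RVt i /\
             0 < kV3 i /\ kV3 i < 1 / LVt i * (kV1 i - 1) * (kV2 i - RVt i)) ->
  0 < sigma ->
  let F := Fcl e Ct LCt RCt LVt RVt RL Rl kC1 kC2 kC3 kV1 kV2 kV3 in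
  let P := Pcl sigma Ct LCt RCt LVt RVt kC1 kC2 kC3 kV1 kV2 kV3 in
  nsd (F^T *m P + P *m F).
Proof.
move=> _ esym eirr hpos hR hk hs F P x.
have Psym : P^T = P.
  by rewrite /P /Pcl tr_mxdiag; apply: eq_mxdiag => i; exact: Pi_sym.
have T1 : forall A : 'M[R]_1, A^T 0 0 = A 0 0 by move=> A; rewrite mxE.
have E : (x^T *m P *m F *m x) 0 0 = (x^T *m (F^T *m P) *m x) 0 0.
  by rewrite -T1 !trmx_mul trmxK Psym !mulmxA.
suff H : (x^T *m P *m F *m x) 0 0 <= 0.
  rewrite mulmxDr mulmxDl [X in X <= 0]mxE -E mulmxA; lra.
rewrite -(@submxcolK _ _ (fun=> 5%N) 1 x) tr_mxcol -[_ *m P *m F]mulmxA.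
rewrite /P /Pcl /F /Fcl mul_mxdiag_mxblock mul_mxrow_mxblock mul_mxrow_mxcol summxE.
set X := submxcol x.
have Hh : forall i, LVt i * kV3 i - (kV1 i - 1) * (kV2 i - RVt i) < 0.
  move=> i; have [_ [_ [_ [hLV _]]]] := hpos i.
  have [_ [_ [_ [_ [_ [_ hk3]]]]]] := hk i.
  have : LVt i * kV3 i < LVt i * (1 / LVt i * (kV1 i - 1) * (kV2 i - RVt i)) by rewrite ltr_pM2l.
  have -> : LVt i * (1 / LVt i * (kV1 i - 1) * (kV2 i - RVt i)) = (kV1 i - 1) * (kV2 i - RVt i).
    by field; rewrite gt_eqF.
  lra.
pose Lc i := sigma * (kC2 i - RCt i) / (1 - kC1 i) * (X i i1 0)^+2
  + sigma / (LVt i * kV3 i - (kV1 i - 1) * (kV2 i - RVt i)) *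
      ((kV2 i - RVt i) * X i i3 0 + kV3 i * X i i4 0)^+2.
under eq_bigr => j _ do rewrite mulmx_suml summxE.
rewrite (eq_bigr (fun j => \sum_i (if i == j then (Lc i - sigma / RL i * (X i ord0 0)^+2)
       - \sum_(k | e i k) (sigma / Rl i k) * (X i ord0 0) ^+ 2
       else if e i j then sigma / Rl i j * X i ord0 0 * X j ord0 0 else 0))); last first.
  move=> j _; apply: eq_bigr => i _; rewrite mulmxA.
  have [hC [hLC [_ [hLV [_ hRL]]]]] := hpos i.
  have [hk1 _] := hk i.
  case: (eqVneq i j) => [<-|neq].
    rewrite blockD; try (by apply: lt0r_neq0); try (by apply: ltr0_neq0 (Hh i));
      try (by rewrite subr_eq0 gt_eqF).
    rewrite /Lc.
    have -> : (1 / (RL i * Ct i) + \sum_(k < N | e i k) 1 / (Rl i k * Ct i)) * (sigma * Ct i) * X i ord0 0 ^+ 2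
        = sigma / RL i * X i ord0 0 ^+ 2 + \sum_(k < N | e i k) sigma / Rl i k * X i ord0 0 ^+ 2.
      rewrite mulrDl mulrDl !big_distrl /=; congr (_ + _).
        by field; rewrite !gt_eqF.
      apply: eq_bigr => k ek; have [hRk _] := hR i k ek.
      by field; rewrite !gt_eqF.
    ring.
  case Eij: (e i j).
    rewrite blockE; have [hRk _] := hR i j Eij.
    by field; rewrite !gt_eqF.
  by rewrite mulmx0 mul0mx mxE.
apply: (@sum_le0 R N e (fun i k => sigma / Rl i k)
   (fun i => Lc i - sigma / RL i * X i ord0 0 ^+ 2) (fun i => X i ord0 0)).
- exact: esym.
- exact: eirr.
- by move=> i j /hR [_ ->].
- by move=> i j /hR [h _]; apply: ltW; apply: divr_gt0.
move=> i; have [hC [hLC [_ [hLV [_ hRL]]]]] := hpos i.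
have [hk1 [hk2 _]] := hk i.
have a1 : sigma * (kC2 i - RCt i) / (1 - kC1 i) <= 0.
  rewrite ler_pdivrMr ?mul0r; [nra | lra].
have a2 : sigma / (LVt i * kV3 i - (kV1 i - 1) * (kV2 i - RVt i)) <= 0.
  by rewrite pmulr_rle0 // invr_le0 ltW // Hh.
have a3 : 0 < sigma / RL i by apply: divr_gt0.
have b1 := mulr_le0_ge0 a1 (sqr_ge0 (X i i1 0)).
have b2 := mulr_le0_ge0 a2 (sqr_ge0 ((kV2 i - RVt i) * X i i3 0 + kV3 i * X i i4 0)).
have b3 := mulr_ge0 (ltW a3) (sqr_ge0 (X i ord0 0)).
rewrite /Lc; lra.
Qed.
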